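(* Let $\mathcal O$ be the suboperad of $\mathrm{CNCB}$ generated by $a:=T_{bbb}$ and $r:=T_{ubu}$. Then $\mathcal O$ admits the presentation with generators $a,r$ of arity $2$ and the single relation $$r\circ_1 r=r\circ_2 r.$$ That is, $\mathcal O$ is isomorphic, via the morphism sending the generators to $a$ and $r$, to the quotient of the free operad on two binary generators by the operadic congruence generated by this relation.
   Context: For $n\ge2$, a bicoloured noncrossing configuration (BNC) of size $n$ is a regular polygon with vertices $1,\dots,n+1$ clockwise, together with disjoint sets of blue and red arcs among the arcs $(i,j)$, $1\le i<j\le n+1$. The arcs $(i,i+1)$ are the edges ($i$th edge), $(1,n+1)$ is the base, and the others are diagonals. Coloured arcs are pairwise noncrossing ($(i,j),(k,l)$ cross iff $i<k<j<l$ or $k<i<l<j$), and red arcs are diagonals. There is one BNC of size $1$, a blue segment, which is the unit. The operad $\mathrm{CNCB}$ has the BNCs as elements (arity = size). Its composition $\mathfrak C\circ_i\mathfrak D$ ($\mathfrak C$ of size $n$, $\mathfrak D$ of size $m$) glues the base of $\mathfrak D$ on the $i$th edge of $\mathfrak C$. Arcs $(a,b)$ of $\mathfrak C$ become $(\sigma(a),\sigma(b))$ with $\sigma(v)=v$ for $v\le i$ and $v+m-1$ otherwise, and arcs $(a,b)$ of $\mathfrak D$ become $(a+i-1,b+i-1)$, keeping colours. The exception is the arc $(i,i+m)$, which is red if the $i$th edge of $\mathfrak C$ and the base of $\mathfrak D$ are both uncoloured, blue if both are blue, and uncoloured otherwise. For $x,y,z\in\{b,u\}$, $T_{xyz}$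 denotes the BNC of size $2$ (a triangle with vertices $1,2,3$) whose first edge $(1,2)$ has colour $x$, whose base $(1,3)$ has colour $y$, and whose second edge $(2,3)$ has colour $z$, where $b$ = blue and $u$ = uncoloured. The suboperad generated by a set is the smallest suboperad containing it. *)

(* Defs.v *)
From mathcomp Require Import all_boot.
Set Implicit Arguments. Unset Strict Implicit. Unset Printing Implicit Defensive.

Inductive colour := Ucol | Bcol | Rcol .

(** Arcs (i,j), 1 <= i < j <= n+1, of the polygon of size n, in
    lexicographic order. *)
Definition arcs (n : nat) : seq (nat * nat) :=
  [seq (i, j) | i <- iota 1 n.+1, j <- iota i.+1 (n.+1 - i)].

(** A (bicoloured noncrossing) configuration of size [bsize]: the list of
    colours of all arcs, in the order of [arcs bsize]. *)
Record bnc := Bnc { bsize : nat; bcols : seq colour }.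

(** Colour of the arc (i,j) ([Ucol] if (i,j) is not an arc). *)
Definition col (c : bnc) (i j : nat) : colour :=
  nth Ucol (bcols c) (index (i, j) (arcs (bsize c))).

Definition mk (n : nat) (f : nat -> nat -> colour) : bnc :=
  Bnc n [seq f p.1 p.2 | p <- arcs n].

(** The BNC property (noncrossing coloured arcs, red arcs are diagonals). *)
Definition coloured (x : colour) : bool := if x is Ucol then false else true.
Definition crossing (i j k l : nat) : bool :=
  ((i < k) && (k < j) && (j < l)) || ((k < i) && (i < l) && (l < j)).
Definition is_bnc (c : bnc) : Prop :=
  size (bcols c) = size (arcs (bsize c)) /\
  (forall i j, col c i j = Rcol -> 1 < j - i /\ ~ (i = 1 /\ j = (bsize c).+1)) /\
  (forall i j k l, coloured (col c i j) -> coloured (col c k l) ->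
      ~~ crossing i j k l).

Definition unitB : bnc := mk 1 (fun p q => if (p, q) == (1, 2) then Bcol else Ucol).

(** Triangle T_xyz: first edge (1,2) colour x, base (1,3) colour y,
    second edge (2,3) colour z. *)
Definition T (x y z : colour) : bnc :=
  mk 2 (fun p q => if (p, q) == (1, 2) then x
                   else if (p, q) == (1, 3) then y
                   else if (p, q) == (2, 3) then z else Ucol).

Definition gen_a : bnc := T Bcol Bcol Bcol.
Definition gen_r : bnc := T Ucol Bcol Ucol.

(** Colour of the glued arc (i,i+m): x = colour of the i-th edge of C,
    y = colour of the base of D. *)
Definition glue (x y : colour) : colour :=
  match x, y with
  | Ucol, Ucol => Rcol
  | Bcol, Bcol => Bcol
  | _, _ => Ucol
  end.

Definition ccomp (C : bnc) (i : nat) (D : bnc) : bnc :=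
  let n := bsize C in
  let m := bsize D in
  let sinv v := if v <= i then v else v + 1 - m in
  let inC v := (v <= i) || (i + m <= v) in
  mk (n + m - 1) (fun p q =>
    if (p, q) == (i, i + m) then glue (col C i i.+1) (col D 1 m.+1)
    else if (i <= p) && (q <= i + m) then col D (p + 1 - i) (q + 1 - i)
    else if inC p && inC q then col C (sinv p) (sinv q)
    else Ucol).

Inductive inO : bnc -> Prop :=
  | inO_unit : inO unitB
  | inO_a : inO gen_a
  | inO_r : inO gen_r
  | inO_comp : forall x y i, inO x -> inO y -> 1 <= i <= bsize x ->
      inO (ccomp x i y).

(** The free (nonsymmetric) operad on two binary generators a, r:
    planar binary trees with internal nodes labelled a or r. *)
Inductive tree := Leaf | NodeA of tree & tree | NodeR of tree & tree.

Fixpoint arity (t : tree) : nat :=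
  match t with
  | Leaf => 1
  | NodeA l r => arity l + arity r
  | NodeR l r => arity l + arity r
  end.

Fixpoint graft (t : tree) (i : nat) (s : tree) : tree :=
  match t with
  | Leaf => if i == 1 then s else Leaf
  | NodeA l r => if i <= arity l then NodeA (graft l i s) r
                 else NodeA l (graft r (i - arity l) s)
  | NodeR l r => if i <= arity l then NodeR (graft l i s) r
                 else NodeR l (graft r (i - arity l) s)
  end.

Definition t_a : tree := NodeA Leaf Leaf.
Definition t_r : tree := NodeR Leaf Leaf.

Fixpoint evalT (t : tree) : bnc :=
  match t with
  | Leaf => unitB
  | NodeA l r => ccomp (ccomp gen_a 2 (evalT r)) 1 (evalT l)
  | NodeR l r => ccomp (ccomp gen_r 2 (evalT r)) 1 (evalT l)
  end.

Inductive cong : tree -> tree -> Prop :=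
  | cong_rel : cong (graft t_r 1 t_r) (graft t_r 2 t_r)
  | cong_refl : forall t, cong t t
  | cong_sym : forall t s, cong t s -> cong s t
  | cong_trans : forall t s u, cong t s -> cong s u -> cong t u
  | cong_comp : forall t t' s s' i, cong t t' -> cong s s' ->
      1 <= i <= arity t -> cong (graft t i s) (graft t' i s').

(* Main.v *)
Require Import Defs.
From mathcomp Require Import all_boot zify.
Set Implicit Arguments. Unset Strict Implicit. Unset Printing Implicit Defensive.

Fixpoint AC0 (c : colour) (t : tree) (p q : nat) {struct t} : colour :=
  match t with
  | Leaf => if (p == 0) && (q == 1) then c else Ucol
  | NodeA l r => if (p == 0) && (q == arity l + arity r) then c
      else if q <= arity l then AC0 Bcol l p q
      else if arity l <= p then AC0 Bcol r (p - arity l) (q - arity l) else Ucol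
  | NodeR l r => if (p == 0) && (q == arity l + arity r) then c
      else if q <= arity l then AC0 Ucol l p q
      else if arity l <= p then AC0 Ucol r (p - arity l) (q - arity l) else Ucol
  end.

Lemma arity_gt0 t : 0 < arity t.
Proof. elim: t => //= l IHl r IHr; lia. Qed.

Lemma mem_arcs n p q : ((p, q) \in arcs n) = (1 <= p) && (p < q) && (q <= n.+1).
Proof.
apply/allpairsPdep/idP.
- case=> x [y [Hx Hy [-> ->]]]; move: Hx Hy; rewrite !mem_iota; lia.
- move=> H; exists p, q; rewrite !mem_iota; split => //; lia.
Qed.

Definition rep (t : tree) : bnc := mk (arity t) (fun p q => AC0 Bcol t (p - 1) (q - 1)).


Lemma AC0_root c t : AC0 c t 0 (arity t) = c.
Proof. by case: t => //= *; rewrite eqxx. Qed.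

Lemma AC0_irr c c' t p q : ~~ ((p == 0) && (q == arity t)) -> AC0 c t p q = AC0 c' t p q.
Proof. by case: t => [|l r|l r] /= H; rewrite (negbTE H). Qed.

Lemma AC0_noR c t p q : c <> Rcol -> AC0 c t p q <> Rcol.
Proof.
elim: t c p q => [|l IHl r IHr|l IHl r IHr] c p q Hc /=; repeat case: ifP => _ //; by [apply: IHl | apply: IHr].
Qed.

Lemma arity_graft t i s : 1 <= i <= arity t -> arity (graft t i s) = arity t + arity s - 1.
Proof.
elim: t i => [|l IHl r IHr|l IHl r IHr] i /= Hi.
- have ->: i = 1 by lia. rewrite /=; lia.
- case: ifP => H /=. rewrite IHl; [lia|lia]. rewrite IHr; [|lia]. have := arity_gt0 l. have := arity_gt0 s. lia.
- case: ifP => H /=. rewrite IHl; [lia|lia]. rewrite IHr; [|lia]. have := arity_gt0 l. have := arity_gt0 s. lia.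
Qed.

Ltac simplb := rewrite /= ?andbT ?andbF ?orbT ?orbF.

Ltac splitatom b :=
  match b with
  | context [?x <= ?y] => case: (boolP (x <= y)) => ?
  | context [?x == ?y :> nat] => case: (boolP (x == y)) => ?
  end.

Ltac splitall :=
  repeat (match goal with |- context [if ?b then _ else _] =>
   lazymatch b with context [if _ then _ else _] => fail | _ => splitatom b end end;
   simplb; try (exfalso; lia)).

Ltac finish c :=
  first [ done | lia
        | (congr (AC0 _ _ _ _); lia)
        | (rewrite AC0_root; done)
        | (apply: AC0_irr; lia)
        | (rewrite [LHS](@AC0_irr _ c); [congr (AC0 _ _ _ _); lia | lia]) ].

Lemma graftAC t v s c p q : v < arity t -> p < q -> q <= arity t + arity s - 1 ->
  AC0 c (graft t v.+1 s) p q =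
  if (p == v) && (q == v + arity s) then AC0 c t v v.+1
  else if (v <= p) && (q <= v + arity s) then AC0 c s (p - v) (q - v)
  else if ((p <= v) || (v + arity s <= p)) && ((q <= v) || (v + arity s <= q))
  then AC0 c t (if p <= v then p else p + 1 - arity s) (if q <= v then q else q + 1 - arity s)
  else Ucol.
Proof.
have Hs := arity_gt0 s.
elim: t v c p q => [|l IHl r IHr|l IHl r IHr] v c p q /= Hv Hpq Hq.
- have -> : v = 0 by lia.
  rewrite /= subn0 subn0 add0n.
  splitall; try finish c.
  all: try (have -> : p = 0 by lia); try (have -> : q = arity s by lia); try finish c.
all: have Hl := arity_gt0 l; have Hr := arity_gt0 r.
all: case: ifP => Hvl /=.
all: try rewrite arity_graft; try lia.
all: try (have -> : v.+1 - arity l = (v - arity l).+1 by lia).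
all: splitall.
all: try (rewrite IHl; try lia; splitall).
all: try (rewrite IHr; try lia; splitall).
all: finish c.
Qed.

Lemma col_mk n f p q : col (mk n f) p q = if (p, q) \in arcs n then f p q else Ucol.
Proof.
rewrite /col /mk /=; case: ifP => H.
  by rewrite (nth_map (0,0)) ?index_mem // nth_index.
by rewrite nth_default // size_map memNindex ?H.
Qed.

Lemma mk_ext n f g : (forall p q, (p, q) \in arcs n -> f p q = g p q) -> mk n f = mk n g.
Proof. move=> H; rewrite /mk; congr Bnc; apply/eq_in_map => -[p q] /= /H. done. Qed.

Lemma glue_AC t s a b a' b' a2 b2 : a' = 0 -> b' = arity s -> a = a2 -> b = b2 ->
  glue (AC0 Bcol t a b) (AC0 Bcol s a' b') = AC0 Bcol t a2 b2.
Proof.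
move=> -> -> -> ->; rewrite AC0_root.
have := @AC0_noR Bcol t a2 b2; case: (AC0 Bcol t a2 b2) => //= H; by case: H.
Qed.

Lemma rep_graft t i s : 1 <= i <= arity t -> rep (graft t i s) = ccomp (rep t) i (rep s).
Proof.
move=> Hi; have Hs := arity_gt0 s.
rewrite /rep /ccomp /= arity_graft //; apply: mk_ext => p q; rewrite mem_arcs => H.
rewrite !col_mk !mem_arcs.
case: i Hi => [|v] Hi; first lia.
rewrite graftAC; try lia.
rewrite xpair_eqE.
splitall.
all: first [ done | lia | (congr (AC0 _ _ _ _); lia) | (apply: glue_AC; lia) | (symmetry; apply: glue_AC; lia)
           | (rewrite [LHS](@AC0_irr _ Bcol); [congr (AC0 _ _ _ _); lia | lia]) | idtac ].
Qed.

Lemma evalT_rep t : evalT t = rep t.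
Proof.
elim: t => [|l IHl r IHr|l IHl r IHr] /=; first by [].
- rewrite IHl IHr.
  have Ea : rep t_a = gen_a by reflexivity.
  rewrite -[NodeA l r]/(graft (NodeA Leaf r) 1 l) rep_graft; last by rewrite /=; have := arity_gt0 r; lia.
  by rewrite -[NodeA Leaf r]/(graft t_a 2 r) rep_graft // Ea.
- rewrite IHl IHr.
  have Ea : rep t_r = gen_r by reflexivity.
  rewrite -[NodeR l r]/(graft (NodeR Leaf r) 1 l) rep_graft; last by rewrite /=; have := arity_gt0 r; lia.
  by rewrite -[NodeR Leaf r]/(graft t_r 2 r) rep_graft // Ea.
Qed.

Lemma P1 t : bsize (evalT t) = arity t.
Proof. by rewrite evalT_rep. Qed.

Lemma P2 t i s : 1 <= i <= arity t -> evalT (graft t i s) = ccomp (evalT t) i (evalT s).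
Proof. by move=> H; rewrite !evalT_rep rep_graft. Qed.

Lemma P3 x : inO x <-> exists t, evalT t = x.
Proof.
split.
- elim=> [|||y z i _ [t1 <-] _ [t2 <-] Hi].
  + by exists Leaf.
  + by exists t_a; vm_compute.
  + by exists t_r; vm_compute.
  + exists (graft t1 i t2); rewrite P2 //; by rewrite -P1.
- case=> t <-; elim: t => [|l IHl r IHr|l IHl r IHr] /=.
  + exact: inO_unit.
  + apply: inO_comp => //; first by apply: inO_comp => //; exact: inO_a.
  + apply: inO_comp => //; first by apply: inO_comp => //; exact: inO_r.
Qed.

Lemma P4 t1 t2 : cong t1 t2 -> evalT t1 = evalT t2.
Proof.
elim=> {t1 t2} [|t|t s _ ->|t s u _ -> _ ->|t t' s s' i _ Ht _ Hs Hi] //.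
- rewrite !P2 ?Ht ?Hs //. by rewrite -P1 -Ht P1.
Qed.

Fixpoint normal t := match t with
  | Leaf => true
  | NodeA l r => normal l && normal r
  | NodeR l r => (if l is NodeR _ _ then false else true) && normal l && normal r
  end.

Fixpoint rapp x y := match x with
  | NodeR a b => NodeR a (rapp b y)
  | _ => NodeR x y end.

Fixpoint nf t := match t with
  | Leaf => Leaf
  | NodeA l r => NodeA (nf l) (nf r)
  | NodeR l r => rapp (nf l) (nf r) end.

Lemma congA l l' r r' : cong l l' -> cong r r' -> cong (NodeA l r) (NodeA l' r').
Proof.
move=> Hl Hr.
have H2 : 1 <= 2 <= arity t_a by [].
have H1 : 1 <= 1 <= arity (graft t_a 2 r) by rewrite /=; have := arity_gt0 r; lia.
exact: (cong_comp (cong_comp (cong_refl t_a) Hr H2) Hl H1).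
Qed.

Lemma congR l l' r r' : cong l l' -> cong r r' -> cong (NodeR l r) (NodeR l' r').
Proof.
move=> Hl Hr.
have H2 : 1 <= 2 <= arity t_r by [].
have H1 : 1 <= 1 <= arity (graft t_r 2 r) by rewrite /=; have := arity_gt0 r; lia.
exact: (cong_comp (cong_comp (cong_refl t_r) Hr H2) Hl H1).
Qed.

Lemma cong_assoc a b c : cong (NodeR (NodeR a b) c) (NodeR a (NodeR b c)).
Proof.
have H3 : 1 <= 3 <= arity (graft t_r 1 t_r) by [].
have H2 : 1 <= 2 <= arity (graft (graft t_r 1 t_r) 3 c) by rewrite /=; have := arity_gt0 c; lia.
have H1 : 1 <= 1 <= arity (graft (graft (graft t_r 1 t_r) 3 c) 2 b)
  by rewrite /=; have := arity_gt0 c; have := arity_gt0 b; lia.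
exact: (cong_comp (cong_comp (cong_comp cong_rel (cong_refl c) H3) (cong_refl b) H2) (cong_refl a) H1).
Qed.

Lemma normal_rapp x y : normal x -> normal y -> normal (rapp x y).
Proof.
elim: x => [|a _ b _|a _ b IHb] //= Hx Hy; rewrite ?Hx ?Hy //.
move: Hx => /andP [/andP [Ha Na] Nb]; rewrite Ha Na IHb //.
Qed.

Lemma cong_rapp x y : cong (NodeR x y) (rapp x y).
Proof.
elim: x y => [|a _ b _|a _ b IHb] y //=; try exact: cong_refl.
apply: cong_trans (cong_assoc a b y) _; apply: congR; [exact: cong_refl | exact: IHb].
Qed.

Lemma normal_nf t : normal (nf t).
Proof. elim: t => [|l IHl r IHr|l IHl r IHr] //=; [by rewrite IHl IHr | exact: normal_rapp]. Qed.

Lemma cong_nf t : cong t (nf t).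
Proof.
elim: t => [|l IHl r IHr|l IHl r IHr] /=; first exact: cong_refl.
- exact: congA.
- apply: cong_trans (cong_rapp _ _); exact: congR.
Qed.

Lemma ACA_l c l r p q : p < q <= arity l -> AC0 c (NodeA l r) p q = AC0 Bcol l p q.
Proof. move=> H; have := arity_gt0 r => ?; rewrite /=; splitall; try lia; done. Qed.
Lemma ACR_l c l r p q : p < q <= arity l -> AC0 c (NodeR l r) p q = AC0 Ucol l p q.
Proof. move=> H; have := arity_gt0 r => ?; rewrite /=; splitall; try lia; done. Qed.
Lemma ACA_r c l r p q : p < q <= arity r ->
  AC0 c (NodeA l r) (p + arity l) (q + arity l) = AC0 Bcol r p q.
Proof. move=> H; have := arity_gt0 l => ?; rewrite /=; splitall; try lia; by rewrite !addnK. Qed.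
Lemma ACR_r c l r p q : p < q <= arity r ->
  AC0 c (NodeR l r) (p + arity l) (q + arity l) = AC0 Ucol r p q.
Proof. move=> H; have := arity_gt0 l => ?; rewrite /=; splitall; try lia; by rewrite !addnK. Qed.

Lemma F1 t c k : 0 < k < arity t -> AC0 c t 0 k = Bcol -> AC0 c t k (arity t) = Bcol ->
  exists l r, t = NodeA l r /\ arity l = k.
Proof.
case: t => [|l r|l r] /= Hk; first lia.
all: have := arity_gt0 l; have := arity_gt0 r => ? ?.
all: splitall; try done.
all: try (by exists l, r; split => //; lia).
have -> : k = arity l by lia.
by rewrite AC0_root.
Qed.

Lemma F2a c a b k m : 0 < k < m -> m < arity a + arity b ->
  AC0 c (NodeR a b) 0 k = Bcol -> AC0 c (NodeR a b) k m = Bcol -> m <= arity a.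
Proof.
move=> H1 H2 /=.
have := arity_gt0 a; have := arity_gt0 b => ? ?.
splitall; try done.
all: try (have -> : k = arity a by lia); try by rewrite AC0_root.
Qed.

Lemma F2b c x y b : AC0 c (NodeR (NodeA x y) b) 0 (arity x) = Bcol /\
  AC0 c (NodeR (NodeA x y) b) (arity x) (arity x + arity y) = Bcol.
Proof.
have := arity_gt0 x; have := arity_gt0 y => ? ?.
split.
  rewrite ACR_l; last by rewrite /=; lia.
  rewrite ACA_l; last lia. by rewrite AC0_root.
rewrite ACR_l; last by rewrite /=; lia.
have -> : arity x = 0 + arity x by [].
rewrite [0 + arity x + _]addnC ACA_r; last lia.
by rewrite AC0_root.
Qed.


Lemma F1d c l r : AC0 c (NodeA l r) 0 (arity l) = Bcol /\
  AC0 c (NodeA l r) (arity l) (arity l + arity r) = Bcol.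
Proof.
have := arity_gt0 l; have := arity_gt0 r => ? ?.
split; first by rewrite ACA_l ?AC0_root //; lia.
have -> : arity l = 0 + arity l by [].
by rewrite [0 + arity l + _]addnC ACA_r ?AC0_root //; lia.
Qed.

Lemma keyR c a1 b1 a2 b2 : (if a1 is NodeR _ _ then false else true) ->
  (if a2 is NodeR _ _ then false else true) -> arity a1 + arity b1 = arity a2 + arity b2 ->
  (forall p q, p < q <= arity a1 + arity b1 -> AC0 c (NodeR a1 b1) p q = AC0 c (NodeR a2 b2) p q) ->
  arity a1 = arity a2.
Proof.
have := arity_gt0 b1; have := arity_gt0 b2 => ? ?.
case: a1 => [|x1 y1|//] _; case: a2 => [|x2 y2|//] _ Hn H //; move: (Hn) => /= Hn2.
- have := arity_gt0 x2; have := arity_gt0 y2 => ? ?.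
  have [E1 E2] := F2b c x2 y2 b2.
  rewrite -H in E1; last by rewrite /=; lia.
  rewrite -H in E2; last by rewrite /=; lia.
  have HH : arity x2 + arity y2 <= arity Leaf.
    by apply: (F2a (k := arity x2) _ _ E1 E2); rewrite /=; lia.
  rewrite /= in HH; lia.
- have := arity_gt0 x1; have := arity_gt0 y1 => ? ?.
  have [E1 E2] := F2b c x1 y1 b1.
  rewrite H in E1; last by rewrite /=; lia.
  rewrite H in E2; last by rewrite /=; lia.
  have HH : arity x1 + arity y1 <= arity Leaf.
    by apply: (F2a (k := arity x1) _ _ E1 E2); rewrite /=; lia.
  rewrite /= in HH; lia.
- have := arity_gt0 x1; have := arity_gt0 y1 => ? ?.
  have := arity_gt0 x2; have := arity_gt0 y2 => ? ?.
  have [E1 E2] := F2b c x1 y1 b1.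
  rewrite H in E1; last by rewrite /=; lia.
  rewrite H in E2; last by rewrite /=; lia.
  have HH : arity x1 + arity y1 <= arity (NodeA x2 y2).
    by apply: (F2a (k := arity x1) _ _ E1 E2); rewrite /=; lia.
  have [E3 E4] := F2b c x2 y2 b2.
  rewrite -H in E3; last by rewrite /=; lia.
  rewrite -H in E4; last by rewrite /=; lia.
  have HH' : arity x2 + arity y2 <= arity (NodeA x1 y1).
    by apply: (F2a (k := arity x2) _ _ E3 E4); rewrite /=; lia.
  rewrite /= in HH HH' *; lia.
Qed.

Lemma inj t1 : forall t2 c, normal t1 -> normal t2 -> arity t1 = arity t2 ->
  (forall p q, p < q <= arity t1 -> AC0 c t1 p q = AC0 c t2 p q) -> t1 = t2.
Proof.
elim: t1 => [|l1 IHl r1 IHr|a1 IHa b1 IHb] t2 c N1 N2 Ha H.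
- case: t2 N2 Ha H => [|l r|l r] //= _ Ha _; have := arity_gt0 l; have := arity_gt0 r; lia.
- have := arity_gt0 l1; have := arity_gt0 r1 => ? ?.
  have [E1 E2] := F1d c l1 r1.
  rewrite H in E1; last by rewrite /=; lia.
  rewrite H in E2; last by rewrite /=; lia.
  have Ha2 : arity l1 + arity r1 = arity t2 by []. rewrite Ha2 in E2.
  have [l2 [r2 [E Hl2]]] := F1 (t := t2) (k := arity l1) (c := c) ltac:(rewrite -Ha /=; lia) E1 E2.
  subst t2.
  move: N1 N2 => /= /andP [N1l N1r] /andP [N2l N2r].
  move: Ha => /= Ha.
  congr NodeA.
  + apply: (IHl _ Bcol); rewrite ?Hl2 // => p q Hpq.
    rewrite -(@ACA_l c l1 r1 p q) // -(@ACA_l c l2 r2 p q); last by rewrite Hl2.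
    apply: H; rewrite /=; lia.
  + apply: (IHr _ Bcol); try done; try lia; move=> p q Hpq.
    rewrite -(@ACA_r c l1 r1 p q) // -(@ACA_r c l2 r2 p q) ?Hl2; last lia.
    apply: H; rewrite /=; lia.
- have := arity_gt0 a1; have := arity_gt0 b1 => ? ?.
  move: N1 => /= /andP [/andP [Hna1 N1a] N1b].
  case: t2 N2 Ha H => [|l2 r2|a2 b2] N2 Ha H.
  + move: Ha => /=; lia.
  + have := arity_gt0 l2; have := arity_gt0 r2 => ? ?.
    have [E1 E2] := F1d c l2 r2.
    rewrite -H in E1; last by move: Ha => /=; lia.
    rewrite -H in E2; last by move: Ha => /=; lia.
    have Ha2 : arity l2 + arity r2 = arity (NodeR a1 b1) by rewrite Ha.
    rewrite Ha2 in E2.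
    have [l [r [E _]]] := F1 (t := NodeR a1 b1) (k := arity l2) (c := c) ltac:(rewrite -Ha2; lia) E1 E2.
    by [].
  + move: N2 => /= /andP [/andP [Hna2 N2a] N2b].
    have Hk := keyR Hna1 Hna2 Ha H.
    move: Ha => /= Ha.
    congr NodeR.
    * apply: (IHa _ Ucol) => // p q Hpq.
      rewrite -(@ACR_l c a1 b1 p q) // -(@ACR_l c a2 b2 p q); last by rewrite -Hk.
      apply: H; rewrite /=; lia.
    * apply: (IHb _ Ucol); try done; try lia; move=> p q Hpq.
      rewrite -(@ACR_r c a1 b1 p q) // -(@ACR_r c a2 b2 p q) -?Hk; last lia.
      apply: H; rewrite /=; lia.
Qed.

Theorem theorem3p18 :
  (* evalT is the operad morphism Free(a,r) -> CNCB *)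
  (forall t, bsize (evalT t) = arity t) /\
  (forall t i s, 1 <= i <= arity t ->
     evalT (graft t i s) = ccomp (evalT t) i (evalT s)) /\
  (* its image is exactly the suboperad O generated by a and r *)
  (forall x, inO x <-> exists t, evalT t = x) /\
  (* its kernel is exactly the congruence generated by r o_1 r = r o_2 r *)
  (forall t1 t2, evalT t1 = evalT t2 <-> cong t1 t2).
Proof.
split; first exact: P1. split; first exact: P2. split; first exact: P3.
move=> t1 t2; split; last exact: P4.
move=> E.
have E' : evalT (nf t1) = evalT (nf t2) by rewrite -(P4 (cong_nf t1)) -(P4 (cong_nf t2)).
have Ha : arity (nf t1) = arity (nf t2) by rewrite -!P1 E'.
have Hn : nf t1 = nf t2.
  apply: (inj (c := Bcol)); try exact: normal_nf; first exact: Ha.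
  move=> p q Hpq.
  have := congr1 (fun b => col b p.+1 q.+1) E'.
  rewrite !evalT_rep /rep !col_mk !mem_arcs Ha.
  have Hc : (0 < p.+1) && (p.+1 < q.+1) && (q.+1 <= (arity (nf t2)).+1) by lia.
  by rewrite Hc !subn1.
apply: cong_trans (cong_nf t1) _; rewrite Hn; apply: cong_sym; exact: cong_nf.
Qed.
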